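(* Let $n\ge1$ and let $\mathcal A_n$ be the real Lie algebra with basis $\{Y,X_1,\dots,X_n\}$ and brackets $[Y,X_i]=X_i$, $[X_i,X_j]=0$. For every inner product on $\mathcal A_n$, every geodesic element is orthogonal to the derived algebra $\mathcal A_n'=\operatorname{Span}(X_1,\dots,X_n)$; consequently, up to scaling, there is only one geodesic element.
   Context: For an inner product $\langle\cdot,\cdot\rangle$ on a real Lie algebra $\mathfrak g$, a nonzero $X\in\mathfrak g$ is a geodesic element if $\langle X,[X,Z]\rangle=0$ for all $Z\in\mathfrak g$. *)

(* Defs.v *)
From HB Require Import structures.
From mathcomp Require Import all_boot all_order all_algebra.
Set Implicit Arguments. Unset Strict Implicit. Unset Printing Implicit Defensive.
Import Order.TTheory GRing.Theory Num.Theory.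
Local Open Scope ring_scope.

(* The Lie algebra A_n is modelled on R^(n+1) = 'rV[R]_(n.+1), with basis
   Y = e_0 and X_i = e_i (i = 1..n).  Writing u = u_0 Y + u', where u' is the
   part of u in Span(X_1..X_n), the bracket determined by [Y,X_i] = X_i,
   [X_i,X_j] = 0 (and bilinearity/antisymmetry) is
      [u, v] = u_0 v' - v_0 u'. *)

Definition An (R : nzRingType) (n : nat) := 'rV[R]_(n.+1).

Definition ycoord (R : nzRingType) (n : nat) (u : An R n) : R := u 0 0.

Definition xpart (R : nzRingType) (n : nat) (u : An R n) : An R n :=
  \row_(j < n.+1) (if j == 0 then 0 else u 0 j).

Definition An_bracket (R : nzRingType) (n : nat) (u v : An R n) : An R n :=
  ycoord u *: xpart v - ycoord v *: xpart u.

Definition An_Y (R : nzRingType) (n : nat) : An R n := delta_mx 0 0.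
Definition An_X (R : nzRingType) (n : nat) (i : 'I_n) : An R n :=
  delta_mx 0 (lift 0 i).

Definition An_derived (R : nzRingType) (n : nat) (u : An R n) : Prop :=
  ycoord u = 0.

Definition is_inner_product (R : realFieldType) (V : lmodType R)
    (ip : V -> V -> R) : Prop :=
  [/\ (forall a u v w, ip (a *: u + v) w = a * ip u w + ip v w),
      (forall u v, ip u v = ip v u) &
      (forall u, u != 0 -> 0 < ip u u)].

Definition geodesic (R : realFieldType) (V : lmodType R)
    (bracket : V -> V -> V) (ip : V -> V -> R) (x : V) : Prop :=
  x != 0 /\ forall z, ip x (bracket x z) = 0.

(* Main.v *)
Require Import Defs.
From HB Require Import structures.
From mathcomp Require Import all_boot all_order all_algebra.
Import Order.TTheory GRing.Theory Num.Theory.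
Local Open Scope ring_scope.
Set Implicit Arguments. Unset Strict Implicit.

Section Aux.
Variables (R : realFieldType) (n : nat) (ip : An R n -> An R n -> R).
Hypothesis hip : is_inner_product ip.

Lemma ipDl a u v w : ip (a *: u + v) w = a * ip u w + ip v w.
Proof. by move: hip => [h _ _]; apply: h. Qed.
Lemma ipC u v : ip u v = ip v u.
Proof. by move: hip => [_ h _]; apply: h. Qed.
Lemma ippos (u : An R n) : u != 0 -> 0 < ip u u.
Proof. by move: hip => [_ _ h]; apply: h. Qed.
Lemma ip0l w : ip 0 w = 0.
Proof.
have := ipDl 1 0 0 w; rewrite scale1r addr0 mul1r => /eqP.
by rewrite -subr_eq subrr eq_sym => /eqP.
Qed.
Lemma ipZr a u w : ip w (a *: u) = a * ip w u.
Proof. by rewrite ipC -[a *: u]addr0 ipDl ip0l addr0 (ipC u w). Qed.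
Lemma ipDr u v w : ip w (u + v) = ip w u + ip w v.
Proof. by rewrite ipC -{1}[u]scale1r ipDl mul1r (ipC u w) (ipC v w). Qed.
Lemma ipNr u w : ip w (- u) = - ip w u.
Proof. by rewrite -scaleN1r ipZr mulN1r. Qed.
Lemma ipBl u v w : ip (u - v) w = ip u w - ip v w.
Proof. by rewrite (ipC _ w) ipDr ipNr (ipC u w) (ipC v w). Qed.
Lemma ipsuml m (F : 'I_m -> An R n) w :
  ip (\sum_(i < m) F i) w = \sum_(i < m) ip (F i) w.
Proof.
elim/big_rec2: _ => [|i y1 y2 _ <-]; first exact: ip0l.
by rewrite -{1}[F i]scale1r ipDl mul1r.
Qed.

Lemma ycoord_xpart (v : An R n) : ycoord (xpart v) = 0.
Proof. by rewrite /ycoord /xpart mxE eqxx. Qed.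
Lemma ycoord_bracket (u v : An R n) : ycoord (An_bracket u v) = 0.
Proof.
by rewrite /An_bracket /ycoord !mxE !eqxx !mulr0 subrr.
Qed.
Lemma xpart_derived (v : An R n) : ycoord v = 0 -> xpart v = v.
Proof.
move=> h; apply/rowP => j; rewrite /xpart mxE; case: eqP => // ->.
by rewrite -h /ycoord; congr (v _ _); apply: val_inj; rewrite /= (ord1 0).
Qed.
Lemma ycoordB (u v : An R n) : ycoord (u - v) = ycoord u - ycoord v.
Proof. by rewrite /ycoord !mxE. Qed.
Lemma ycoordZ a (u : An R n) : ycoord (a *: u) = a * ycoord u.
Proof. by rewrite /ycoord !mxE. Qed.

Definition orth (x : An R n) := forall z, An_derived z -> ip x z = 0.

Lemma geo_y x : geodesic (@An_bracket R n) ip x -> ycoord x != 0.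
Proof.
case=> nz g; apply/negP => /eqP h0.
have := g (An_Y R n).
have ->: An_bracket x (An_Y R n) = - x.
  rewrite /An_bracket h0 scale0r add0r xpart_derived //.
  by rewrite /ycoord /An_Y mxE !eqxx scale1r.
rewrite ipNr => /eqP; rewrite oppr_eq0 => /eqP h.
by have := ippos nz; rewrite h ltxx.
Qed.

Lemma geo_orth x : geodesic (@An_bracket R n) ip x -> orth x.
Proof.
move=> gx z hz; have y0 := geo_y gx; case: gx => _ g.
have := g z; rewrite /An_bracket hz scale0r subr0 xpart_derived // ipZr.
by move/eqP; rewrite mulf_eq0 (negbTE y0) /= => /eqP.
Qed.

Lemma orth_geo x : x != 0 -> orth x -> geodesic (@An_bracket R n) ip x.
Proof. by move=> nz o; split => // z; apply: o; apply: ycoord_bracket. Qed.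

Lemma exists_orth : exists x, x != 0 /\ orth x.
Proof.
pose M : 'M[R]_(n.+1, n) := \matrix_(j, i) ip (delta_mx 0 j) (An_X R i).
have hK : kermx M != 0.
  rewrite -mxrank_eq0 mxrank_ker subn_eq0 -ltnNge.
  by apply: leq_ltn_trans (rank_leq_col M) _.
have [i hi] : exists i, row i (kermx M) != 0.
  apply/existsP; apply: contraR hK => /existsPn h; apply/eqP/row_matrixP => i.
  by rewrite row0; apply/eqP; move: (h i); rewrite negbK.
set u := row i (kermx M).
have uM : u *m M = 0 by apply/sub_kermxP; apply: row_sub.
have oX k : ip u (An_X R k) = 0.
  move/matrixP: (uM) => /(_ 0 k); rewrite !mxE => <-.
  transitivity (ip (\sum_(j < n.+1) u 0 j *: 'e_j) (An_X R k)); first by rewrite -(row_sum_delta u).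
  rewrite ipsuml; apply: eq_bigr => j _.
  by rewrite [M j k]mxE -{1}[_ *: _]addr0 ipDl ip0l addr0.
exists u; split => // z hz.
rewrite (row_sum_delta z) big_ord_recl.
have ->: z 0 0 = 0 by move: hz; rewrite /An_derived /ycoord.
rewrite scale0r add0r.
elim/big_rec: _ => [|k y _ IH]; first by rewrite -(scale0r 0) ipZr mul0r.
by rewrite ipDr ipZr IH addr0 (oX k) mulr0.
Qed.

End Aux.

Theorem lemma5p1 (R : realFieldType) (n : nat) (hn : (0 < n)%N)
    (ip : An R n -> An R n -> R) (hip : is_inner_product ip) :
  (forall x, geodesic (@An_bracket R n) ip x ->
     forall z, An_derived z -> ip x z = 0) /\
  (exists x0, geodesic (@An_bracket R n) ip x0 /\
     forall x, geodesic (@An_bracket R n) ip x -> exists c : R, x = c *: x0).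
Proof.
split; first by move=> x gx; apply: geo_orth.
have [x0 [nz o]] := exists_orth hip.
have g0 := orth_geo nz o.
exists x0; split => // x gx.
have y0 := geo_y hip g0.
exists (ycoord x / ycoord x0).
set c := ycoord x / ycoord x0.
pose w := x - c *: x0.
have hw : An_derived w.
  by rewrite /An_derived /w ycoordB ycoordZ /c divfK // subrr.
apply/eqP; rewrite -subr_eq0 -/w; apply/negP => /negP nw.
have := ippos hip nw.
have -> : ip w w = 0.
  rewrite {1}/w ipBl // -{1}[c *: x0]addr0 ipDl // ip0l // addr0.
  by rewrite (geo_orth hip gx) // o // mulr0 subrr.
by rewrite ltxx.
Qed.
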